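(* (a) For any two Gödel sets $V,V'$, a sentence of the BS class w.r.t. 1-satisfiability is 1-satisfiable in $G_V$ if and only if it is 1-satisfiable in $G_{V'}$. (b) For any two infinite Gödel sets $V,V'$, a sentence of the BS class w.r.t. validity is valid in $G_V$ if and only if it is valid in $G_{V'}$. (c) For every $m\ge2$, the set of sentences of the BS class w.r.t. validity that are valid in $G_{m+1}$ is a proper subset of the set of such sentences valid in $G_m$.
   Context: A Gödel set is a closed set $V\subseteq[0,1]$ with $0,1\in V$. A $V$-interpretation assigns to each $k$-ary predicate a function $U^k\to V$ on a nonempty domain $U$ (constants as usual); $\bot\mapsto0$, $\wedge,\vee$ are $\min,\max$, $\mathcal I(A\supset B)=1$ if $\mathcal I(A)\le\mathcal I(B)$ and $=\mathcal I(B)$ otherwise, $\forall,\exists$ are $\inf,\sup$ over $U$. A sentence is valid in $G_V$ if every $V$-interpretation gives it value $1$, and 1-satisfiable in $G_V$ if some $V$-interpretation gives it value $1$. For $m\ge2$, $G_m$ denotes $G_V$ for the $m$-element Gödel set $V_m=\{1\}\cup\{1-1/k: 1\le k\le m-1\}$. The BS class w.r.t. 1-satisfiability consists of sentences $\exists\bar x\forall\bar y\,\psi$, and the BS class w.r.t. validity of sentences $\forall\bar x\exists\bar y\,\psi$, where $\psi$ is quantifier-free, the tuples may be empty, and the signature has no function symbols of positive arity (propositional variables, i.e. $0$-ary predicates, are allowed). *)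

(* Defs.v *)
From HB Require Import structures.
From mathcomp Require Import all_boot all_order all_algebra.
From mathcomp Require Import all_classical all_reals all_analysis.
From mathcomp Require Import Rstruct Rstruct_topology.
From Stdlib Require Import Rdefinitions.

Set Implicit Arguments.
Unset Strict Implicit.
Unset Printing Implicit Defensive.

Import Order.TTheory GRing.Theory Num.Theory.
Local Open Scope classical_set_scope.
Local Open Scope ring_scope.

Inductive fo_term : Type :=
| TVar : nat -> fo_term
| TCst : nat -> fo_term.

(* Atomic formulas P(t_1,...,t_k): a predicate symbol together with its
   argument list; the arity of the occurrence is the length of the list
   (the pair (p, length) is the actual predicate symbol).  0-ary predicates
   are propositional variables. *)
Inductive fo_form : Type :=
| FBot : fo_form
| FAtom : nat -> seq fo_term -> fo_form
| FAnd : fo_form -> fo_form -> fo_form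
| FOr : fo_form -> fo_form -> fo_form
| FImp : fo_form -> fo_form -> fo_form
| FAll : nat -> fo_form -> fo_form
| FEx : nat -> fo_form -> fo_form.

Fixpoint qfree (A : fo_form) : bool :=
  match A with
  | FBot | FAtom _ _ => true
  | FAnd B C | FOr B C | FImp B C => qfree B && qfree C
  | FAll _ _ | FEx _ _ => false
  end.

Definition term_vars (t : fo_term) : seq nat :=
  match t with TVar x => [:: x] | TCst _ => [::] end.

Fixpoint free_vars (A : fo_form) : seq nat :=
  match A with
  | FBot => [::]
  | FAtom _ ts => flatten (map term_vars ts)
  | FAnd B C | FOr B C | FImp B C => free_vars B ++ free_vars C
  | FAll x B | FEx x B => seq.filter (fun y => y != x) (free_vars B)
  end.

Definition sentence (A : fo_form) : bool := free_vars A == [::].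

Definition alls (xs : seq nat) (A : fo_form) : fo_form := foldr FAll A xs.
Definition exs (xs : seq nat) (A : fo_form) : fo_form := foldr FEx A xs.

Definition BS_sat (A : fo_form) : Prop :=
  sentence A /\
  exists (xs ys : seq nat) (psi : fo_form), qfree psi /\ A = exs xs (alls ys psi).

Definition BS_val (A : fo_form) : Prop :=
  sentence A /\
  exists (xs ys : seq nat) (psi : fo_form), qfree psi /\ A = alls xs (exs ys psi).

Definition godel_set (V : set R) : Prop :=
  closed V /\ V `<=` [set x | 0 <= x <= 1] /\ V 0 /\ V 1.

Definition Vm (m : nat) : set R :=
  [set x : R | x = 1 \/ exists k : nat, (0 < k)%nat /\ (k < m)%nat /\ x = 1 - (k%:R)^-1].

Definition upd (U : Type) (e : nat -> U) (x : nat) (u : U) : nat -> U :=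
  fun y => if y == x then u else e y.

Definition eval_term (U : Type) (c : nat -> U) (e : nat -> U) (t : fo_term) : U :=
  match t with TVar x => e x | TCst k => c k end.

Fixpoint eval (U : Type) (c : nat -> U) (P : nat -> seq U -> R)
  (e : nat -> U) (A : fo_form) : R :=
  match A with
  | FBot => 0
  | FAtom p ts => P p (map (eval_term c e) ts)
  | FAnd B C => Num.min (eval c P e B) (eval c P e C)
  | FOr B C => Num.max (eval c P e B) (eval c P e C)
  | FImp B C =>
      if eval c P e B <= eval c P e C then 1 else eval c P e C
  | FAll x B => inf [set eval c P (upd e x u) B | u in [set: U]]
  | FEx x B => sup [set eval c P (upd e x u) B | u in [set: U]]
  end.

(* A V-interpretation: nonempty domain U (witnessed by u0), constants c,
   and predicates P valued in V.  The value of a sentence is computed in an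
   arbitrary assignment (irrelevant for closed formulas); we use the constant
   assignment at u0. *)
Definition V_interp (V : set R) (U : Type) (P : nat -> seq U -> R) : Prop :=
  forall p l, V (P p l).

Definition valid (V : set R) (A : fo_form) : Prop :=
  forall (U : Type) (u0 : U) (c : nat -> U) (P : nat -> seq U -> R),
    V_interp V P -> eval c P (fun _ => u0) A = 1.

Definition sat1 (V : set R) (A : fo_form) : Prop :=
  exists (U : Type) (u0 : U) (c : nat -> U) (P : nat -> seq U -> R),
    V_interp V P /\ eval c P (fun _ => u0) A = 1.

(* Main.v *)
Require Import Defs.
From mathcomp Require Import all_boot all_order all_algebra.
From mathcomp Require Import all_classical all_reals all_analysis.
From mathcomp Require Import Rstruct Rstruct_topology.
From Stdlib Require Import Rdefinitions.
Set Implicit Arguments.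
Unset Strict Implicit.
Unset Printing Implicit Defensive.
Import Order.TTheory GRing.Theory Num.Theory.
Local Open Scope classical_set_scope.
Local Open Scope ring_scope.
Local Notation eval := Defs.eval.

Section Img.
Variables (T : Type) (f : T -> R).
Hypothesis f01 : forall u, 0 <= f u <= 1.

Lemma img_ne (t : T) : [set f u | u in [set: T]] !=set0.
Proof. by exists (f t); exists t. Qed.

Lemma inf_le_img u : inf [set f u | u in [set: T]] <= f u.
Proof.
apply: ge_inf; last by exists u.
exists 0 => y [v _ <-]; by case/andP: (f01 v).
Qed.

Lemma img_le_sup u : f u <= sup [set f u | u in [set: T]].
Proof.
apply: ub_le_sup; last by exists u.
exists 1 => y [v _ <-]; by case/andP: (f01 v).
Qed.

Lemma inf_ge_img (t : T) x : (forall u, x <= f u) -> x <= inf [set f u | u in [set: T]].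
Proof. by move=> H; apply: lb_le_inf (img_ne t) _ => y [v _ <-]. Qed.

Lemma sup_le_img (t : T) x : (forall u, f u <= x) -> sup [set f u | u in [set: T]] <= x.
Proof. by move=> H; apply: ge_sup (img_ne t) _ => y [v _ <-]. Qed.

Lemma inf_img01 (t : T) : 0 <= inf [set f u | u in [set: T]] <= 1.
Proof.
apply/andP; split; first by apply: (inf_ge_img t) => u; case/andP: (f01 u).
by apply: le_trans (inf_le_img t) _; case/andP: (f01 t).
Qed.

Lemma sup_img01 (t : T) : 0 <= sup [set f u | u in [set: T]] <= 1.
Proof.
apply/andP; split; last by apply: (sup_le_img t) => u; case/andP: (f01 u).
by apply: le_trans (img_le_sup t); case/andP: (f01 t).
Qed.

Lemma sup_gt_img (t : T) x : x < sup [set f u | u in [set: T]] -> exists u, x < f u.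
Proof.
move=> H; apply: contrapT => Hn.
have : sup [set f u | u in [set: T]] <= x.
  apply: (sup_le_img t) => u; rewrite leNgt; apply/negP => Hu; apply: Hn; by exists u.
by rewrite leNgt H.
Qed.

Lemma inf_lt_img (t : T) x : inf [set f u | u in [set: T]] < x -> exists u, f u < x.
Proof.
move=> H; apply: contrapT => Hn.
have : x <= inf [set f u | u in [set: T]].
  apply: (inf_ge_img t) => u; rewrite leNgt; apply/negP => Hu; apply: Hn; by exists u.
by rewrite leNgt H.
Qed.
End Img.

Section Basic.
Variables (U : Type) (c : nat -> U) (P : nat -> seq U -> R).
Hypothesis P01 : forall p l, 0 <= P p l <= 1.

Lemma eval01 e A : 0 <= eval c P e A <= 1.
Proof.
elim: A e => [|p ts|B IB C IC|B IB C IC|B IB C IC|x B IB|x B IB] e /=.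
- by rewrite lexx ler01.
- exact: P01.
- case/andP: (IB e) => h1 h2; case/andP: (IC e) => h3 h4.
  by rewrite le_min ge_min h1 h2 h3.
- case/andP: (IB e) => h1 h2; case/andP: (IC e) => h3 h4.
  by rewrite le_max ge_max h1 h2 h4.
- by case: ifP => _; [rewrite ler01 lexx | exact: IC].
- exact: (inf_img01 (fun u => IB (upd e x u)) (e x)).
- exact: (sup_img01 (fun u => IB (upd e x u)) (e x)).
Qed.
End Basic.
Lemma invn_lt (j k : nat) : (0 < j)%nat -> (0 < k)%nat -> ((k%:R : R)^-1 < (j%:R)^-1) = (j < k)%nat.
Proof. by move=> hj hk; rewrite ltf_pV2 ?posrE ?ltr0n // ltr_nat. Qed.
Lemma invn_le (j k : nat) : (0 < j)%nat -> (0 < k)%nat -> ((k%:R : R)^-1 <= (j%:R)^-1) = (j <= k)%nat.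
Proof. by move=> hj hk; rewrite lef_pV2 ?posrE ?ltr0n // ler_nat. Qed.

Lemma Vm01 m x : Vm m x -> 0 <= x <= 1.
Proof.
case=> [->|[k [hk [_ ->]]]]; first by rewrite ler01 lexx.
rewrite subr_ge0 gerBl invr_ge0 ler0n andbT.
by rewrite invf_le1 ?ltr0n // ler1n.
Qed.

Lemma Vm_sub m : Vm m `<=` Vm m.+1.
Proof. move=> x [->|[k [h1 [h2 ->]]]]; [by left|right; exists k; split=> //; split=> //; exact: ltnW]. Qed.

Lemma VK m y (j : nat) : Vm m y -> (1 <= j)%nat -> y < 1 - (j%:R)^-1 ->
  (2 <= j)%nat /\ y <= 1 - ((j.-1)%:R)^-1.
Proof.
move=> [->|[k [hk [_ ->]]]] hj.
  by rewrite ltNge gerBl invr_ge0 ler0n.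
rewrite ltrD2l ltrN2 invn_lt // => hkj.
split; first by apply: leq_ltn_trans hkj.
rewrite lerD2l lerN2 invn_le //; last by rewrite -ltnS prednK //; apply: leq_ltn_trans hkj.
by rewrite -ltnS prednK //; apply: leq_trans hj.
Qed.

Lemma VK0 m y : (2 <= m)%nat -> Vm m y -> y < 1 -> y <= 1 - ((m.-1)%:R)^-1.
Proof.
move=> hm [->|[k [hk [hkm ->]]]]; first by rewrite ltxx.
move=> _; rewrite lerD2l lerN2 invn_le //.
  by rewrite -ltnS prednK //; apply: leq_trans hm.
by rewrite -ltnS prednK //; apply: leq_trans hm.
Qed.

Definition chainD (i : nat) : fo_form := FImp (FAtom i [::]) (FAtom i.+1 [::]).
Definition chain (m : nat) : fo_form := foldr FOr FBot (map chainD (iota 0 m)).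

Section Disj.
Variables (U : Type) (c : nat -> U) (P : nat -> seq U -> R).
Hypothesis P01 : forall p l, 0 <= P p l <= 1.

Lemma disj_ge (D : nat -> fo_form) e (l : seq nat) i : i \in l ->
  eval c P e (D i) <= eval c P e (foldr FOr FBot (map D l)).
Proof.
elim: l => //= a l IH; rewrite in_cons => /orP [/eqP ->|/IH h].
  by rewrite le_max lexx.
by rewrite le_max h orbT.
Qed.

Lemma disj_lt (D : nat -> fo_form) e (l : seq nat) :
  (forall i, i \in l -> eval c P e (D i) < 1) ->
  eval c P e (foldr FOr FBot (map D l)) < 1.
Proof.
elim: l => [|a l IH] H /=; first by rewrite ltr01.
rewrite gt_max H ?mem_head //=; apply: IH => i hi; apply: H; by rewrite in_cons hi orbT.
Qed.
End Disj.

Lemma chain_BS m : BS_val (chain m).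
Proof.
have qf : forall l, qfree (foldr FOr FBot (map chainD l)) by elim=> //.
have fv : forall l, free_vars (foldr FOr FBot (map chainD l)) = [::] by elim=> //.
split; first by rewrite /sentence fv.
by exists [::], [::], (chain m); split=> //; apply: qf.
Qed.

Lemma chain_valid m : (2 <= m)%nat -> valid (Vm m) (chain m).
Proof.
move=> hm U u0 c P HP.
have P01 : forall p l, 0 <= P p l <= 1 by move=> p l; apply: (Vm01 (HP p l)).
set e := fun _ => u0.
apply: contrapT => hne.
have hlt : eval c P e (chain m) < 1.
  by rewrite lt_neqAle; apply/andP; split; [apply/eqP|case/andP: (eval01 c P01 e (chain m))].
pose v i := P i [::].
have dec : forall i, (i < m)%nat -> v i.+1 < v i.
  move=> i hi; have := le_lt_trans (@disj_ge _ c P chainD e (iota 0 m) i _) hlt.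
  rewrite mem_iota add0n hi /= => /(_ isT).
  rewrite /chainD /=; case: ifP => [_|/negbT]; first by rewrite ltxx.
  by rewrite -ltNge.
have claim : forall i, (1 <= i)%nat -> (i < m)%nat -> v i <= 1 - ((m - i)%:R)^-1.
  elim=> // i IH _ him.
  case: (posnP i) => [->|hi].
    rewrite subn1; apply: (VK0 hm (HP _ _)).
    by apply: lt_le_trans (dec 0%nat _) _; [apply: leq_trans hm|case/andP: (P01 0%nat [::])].
  have := lt_le_trans (dec i (ltnW him)) (IH hi (ltnW him)).
  case/(VK (HP _ _)); first by rewrite subn_gt0 ltnW.
  by move=> _; rewrite subnS.
have [j hj] : exists j, m = j.+1 by exists m.-1; rewrite prednK //; apply: leq_trans hm.
subst m.
have := lt_le_trans (dec j (ltnSn j)) (claim j hm (ltnSn j)).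
rewrite subSnn invr1 subrr ltNge.
by case/andP: (P01 j.+1 [::]) => ->.
Qed.

Lemma chain_notvalid m : (1 <= m)%nat -> ~ valid (Vm m.+1) (chain m).
Proof.
move=> hm Hv.
pose w (i : nat) : R := if i == 0%nat then 1 else 1 - ((m.+1 - i)%:R)^-1.
have Hw : forall i, Vm m.+1 (w i).
  move=> [|i]; first by left.
  have -> : w i.+1 = 1 - ((m - i)%:R)^-1 by rewrite /w subSS.
  case: (leqP i.+1 m) => hi.
    right; exists (m - i)%nat; split; first by rewrite subn_gt0.
    by split=> //; apply: leq_ltn_trans (leq_subr _ _) _.
  left; have -> : (m - i)%nat = 0%nat by apply/eqP; rewrite subn_eq0.
  by rewrite invr0 subr0.
have := Hv unit tt (fun _ => tt) (fun p _ => w p) (fun p _ => Hw p).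
apply/eqP; rewrite lt_eqF //.
apply: disj_lt => i; rewrite mem_iota add0n => /andP [_ him] /=.
have wS : forall j, w j.+1 = 1 - ((m - j)%:R)^-1 by move=> j; rewrite /w subSS.
have w1lt : w i.+1 < w i.
  case: i him => [|i] him.
    by rewrite wS /w /= subn0 gtrBl invr_gt0 ltr0n; apply: leq_trans him.
  rewrite !wS ltrD2l ltrN2 invn_lt ?subn_gt0 //; last by apply: ltnW.
  by rewrite subnS prednK // subn_gt0 ltnW.
rewrite ifN; last by rewrite -ltNge.
by rewrite wS gtrBl invr_gt0 ltr0n subn_gt0.
Qed.

Lemma partC m : (2 <= m)%nat ->
     (forall A : fo_form, BS_val A -> valid (Vm m.+1) A -> valid (Vm m) A) /\
     (exists A : fo_form, BS_val A /\ valid (Vm m) A /\ ~ valid (Vm m.+1) A).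
Proof.
move=> hm; split.
  move=> A _ Hv U u0 c P HP; apply: Hv => p l; apply: Vm_sub; exact: HP.
exists (chain m); split; first exact: chain_BS.
split; first exact: chain_valid.
by apply: chain_notvalid; apply: ltnW.
Qed.

Section PhiMap.
Variables (U : Type) (c : nat -> U) (P : nat -> seq U -> R).
Hypothesis P01 : forall p l, 0 <= P p l <= 1.
Definition phi (x : R) : R := if 0 < x then 1 else 0.
Definition Pphi p l := phi (P p l).
Lemma Pphi01 p l : 0 <= Pphi p l <= 1.
Proof. by rewrite /Pphi /phi; case: ifP; rewrite ?lexx ?ler01. Qed.

Lemma phi_mono a b : a <= b -> phi a <= phi b.
Proof.
rewrite /phi => hab; case: ifP => ha; case: ifP => hb; rewrite ?lexx ?ler01 //.
by move: hb; rewrite (lt_le_trans ha hab).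
Qed.

Lemma qf_phi e B : qfree B -> eval c Pphi e B = phi (eval c P e B).
Proof.
elim: B e => [|p ts|B IB C IC|B IB C IC|B IB C IC|x B IB|x B IB] e //=.
- by rewrite /phi ltxx.
- case/andP=> qB qC; rewrite IB // IC //.
  case: (leP (eval c P e B) (eval c P e C)) => h.
    by rewrite !min_l // phi_mono.
  by rewrite !min_r // phi_mono // ltW.
- case/andP=> qB qC; rewrite IB // IC //.
  case: (leP (eval c P e B) (eval c P e C)) => h.
    by rewrite !max_r // phi_mono.
  by rewrite !max_l // phi_mono // ltW.
- case/andP=> qB qC; rewrite IB // IC //.
  case: (leP (eval c P e B) (eval c P e C)) => h.
    by rewrite phi_mono // /phi ltr01.
  case hC: (0 < eval c P e C).
    by rewrite /phi hC (lt_trans hC h) lexx.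
  have hB : 0 < eval c P e B.
    by apply: le_lt_trans h; case/andP: (eval01 c P01 e C).
  by rewrite /phi hB hC ler10.
Qed.

Lemma alls_phi ys B e : qfree B -> 0 < eval c P e (alls ys B) -> eval c Pphi e (alls ys B) = 1.
Proof.
move=> qB; elim: ys e => [|y ys IH] e /=.
  by move=> h; rewrite qf_phi // /phi h.
move=> h.
have H1 : forall u, eval c Pphi (upd e y u) (alls ys B) = 1.
  move=> u; apply: IH; apply: lt_le_trans h _.
  by apply: (inf_le_img (fun u => eval01 c P01 (upd e y u) (alls ys B))).
apply/eqP; rewrite eq_le; apply/andP; split.
  by case/andP: (inf_img01 (fun u => eval01 c Pphi01 (upd e y u) (alls ys B)) (e y)).
by apply: (inf_ge_img (e y)) => u; rewrite H1.
Qed.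

Lemma exs_phi xs C e : (forall e, 0 < eval c P e C -> eval c Pphi e C = 1) ->
  0 < eval c P e (exs xs C) -> eval c Pphi e (exs xs C) = 1.
Proof.
move=> HC; elim: xs e => [|x xs IH] e /=; first exact: HC.
move=> /(sup_gt_img (e x)) [u hu].
have H1 := IH _ hu.
apply/eqP; rewrite eq_le; apply/andP; split.
  by case/andP: (sup_img01 (fun u => eval01 c Pphi01 (upd e x u) (exs xs C)) (e x)).
rewrite -{1}H1.
exact: (img_le_sup (fun u => eval01 c Pphi01 (upd e x u) (exs xs C))).
Qed.
End PhiMap.

Lemma sat_transfer V V' A : godel_set V -> godel_set V' -> BS_sat A -> sat1 V A -> sat1 V' A.
Proof.
move=> [_ [HV _]] [_ [_ [V'0 V'1]]] [_ [xs [ys [psi [qpsi ->]]]]] [U [u0 [c [P [HP Hev]]]]].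
have P01 : forall p l, 0 <= P p l <= 1 by move=> p l; exact: (HV _ (HP p l)).
exists U, u0, c, (Pphi P); split.
  by move=> p l; rewrite /Pphi /phi; case: ifP.
apply: exs_phi => //; last by rewrite Hev ltr01.
by move=> e; apply: alls_phi.
Qed.

Lemma partA (V V' : set R) : godel_set V -> godel_set V' ->
     forall A : fo_form, BS_sat A -> (sat1 V A <-> sat1 V' A).
Proof. by move=> gV gV' A hA; split; apply: sat_transfer. Qed.

Section Embed.

Lemma sorted_le_of_lt (s : seq R) : sorted <%O s -> sorted <=%O s.
Proof. by apply: sub_sorted => x y /ltW. Qed.

Lemma sorted_idx (s : seq R) a b : sorted <%O s -> a \in s -> b \in s -> a < b ->
  (index a s < index b s)%nat.
Proof.
move=> Hs ha hb hab; rewrite ltnNge; apply/negP => hle.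
have := sorted_leq_nth le_trans lexx 0 (sorted_le_of_lt Hs).
move=> /(_ (index b s) (index a s)); rewrite !inE !index_mem !nth_index // => /(_ hb ha hle).
by rewrite leNgt hab.
Qed.

Lemma sorted_nth_lt (s : seq R) i j : sorted <%O s -> (i < j)%nat -> (j < size s)%nat ->
  nth 0 s i < nth 0 s j.
Proof.
move=> Hs hij hj; apply: (sorted_ltn_nth lt_trans 0 Hs) => //; rewrite inE //.
exact: ltn_trans hij hj.
Qed.

Lemma idx_min (s : seq R) x : sorted <%O s -> x \in s -> (forall y, y \in s -> x <= y) ->
  index x s = 0%nat.
Proof.
move=> Hs hx hmin; case: (posnP (index x s)) => // hpos.
have := sorted_nth_lt Hs hpos; rewrite index_mem nth_index // => /(_ hx) h.
have hs : (0 < size s)%nat by rewrite -index_mem in hx; apply: leq_ltn_trans hx.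
by have := hmin _ (mem_nth 0 hs); rewrite leNgt h.
Qed.

Lemma idx_max (s : seq R) x : sorted <%O s -> x \in s -> (forall y, y \in s -> y <= x) ->
  index x s = (size s).-1.
Proof.
move=> Hs hx hmax.
have hi : (index x s < size s)%nat by rewrite index_mem.
have hs : (0 < size s)%nat by apply: leq_ltn_trans hi.
case: (ltngtP (index x s) (size s).-1) => // h.
  have hl : ((size s).-1 < size s)%nat by rewrite prednK.
  have := sorted_nth_lt Hs h hl; rewrite nth_index // => h2.
  have := hmax _ (mem_nth 0 hl).
  by rewrite leNgt h2.
by move: hi; rewrite -(prednK hs) ltnS leqNgt h.
Qed.

Variable W : set R.
Hypothesis Winf : infinite_set W.

Lemma pick_distinct n : exists Q : seq R, [/\ uniq Q, size Q = n &
  forall x, x \in Q -> [/\ W x, x != 0 & x != 1]].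
Proof.
elim: n => [|n [Q [uQ sQ HQ]]]; first by exists [::].
have [y [Wy hy]] := infinite_setN0 (infinite_setD Winf (finite_seq [:: 0, 1 & Q])).
have hy' : y \notin [:: 0, 1 & Q] by apply/negP.
exists (y :: Q); split.
- by rewrite /= uQ andbT; apply: contra hy' => h; rewrite !in_cons h !orbT.
- by rewrite /= sQ.
- move=> x; rewrite in_cons => /orP [/eqP ->|/HQ //].
  move: hy'; rewrite !in_cons !negb_or => /and3P [h0 h1 _]; by split.
Qed.

Hypothesis W0 : W 0.
Hypothesis W1 : W 1.
Hypothesis W01 : W `<=` [set x | 0 <= x <= 1].

Lemma embed (S : seq R) : (forall x, x \in S -> 0 <= x <= 1) -> 0 \in S -> 1 \in S ->
  exists h : R -> R, [/\ forall x, W (h x), h 0 = 0, h 1 = 1 &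
     forall a b, a \in S -> b \in S -> a < b -> h a < h b].
Proof.
move=> S01 S0 S1.
pose Ss := sort <=%O (undup S).
have mSs : forall x, (x \in Ss) = (x \in S) by move=> x; rewrite mem_sort mem_undup.
have sSs : sorted <%O Ss by rewrite sort_lt_sorted undup_uniq.
have uSs : uniq Ss by rewrite sort_uniq undup_uniq.
have k2 : (2 <= size Ss)%nat.
  have -> : 2%nat = size [:: (0:R); 1] by [].
  apply: uniq_leq_size; first by rewrite /= in_cons negb_or andbT eq_sym oner_eq0.
  by move=> x; rewrite !in_cons orbF => /orP [/eqP ->|/eqP ->]; rewrite mSs.
have [Q [uQ sQ HQ]] := pick_distinct (size Ss - 2).
pose T := sort <=%O [:: 0, 1 & Q].
have mT : forall x, (x \in T) = (x \in [:: 0, 1 & Q]) by move=> x; rewrite mem_sort.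
have uT : uniq [:: (0:R), 1 & Q].
  rewrite /= uQ andbT !in_cons negb_or eq_sym oner_eq0 /=; apply/andP; split.
    by apply/negP => /HQ [_ /eqP].
  by apply/negP => /HQ [_ _ /eqP].
have sT : sorted <%O T by rewrite sort_lt_sorted.
have sizeT : size T = size Ss by rewrite size_sort /= sQ -addn2 subnK.
have T01 : forall x, x \in T -> 0 <= x <= 1.
  move=> x; rewrite mT !in_cons => /orP [/eqP ->|/orP [/eqP ->|/HQ [Wx _ _]]].
  - by rewrite lexx ler01.
  - by rewrite ler01 lexx.
  - exact: W01.
have Ss01 : forall x, x \in Ss -> 0 <= x <= 1 by move=> x; rewrite mSs; apply: S01.
have T0 : 0 \in T by rewrite mT mem_head.
have T1 : 1 \in T by rewrite mT !in_cons eqxx orbT.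
exists (fun x => nth 0 T (index x Ss)); split.
- move=> x; case: (ltnP (index x Ss) (size T)) => hx; last by rewrite nth_default.
  move: (mem_nth 0 hx); rewrite mT !in_cons => /orP [/eqP ->|/orP [/eqP ->|/HQ [Wx _ _]]] //.
- rewrite (idx_min sSs) ?mSs // => [|y /Ss01 /andP [] //].
  rewrite -{1}(idx_min sT T0) ?nth_index // => y /T01 /andP [] //.
- rewrite (idx_max sSs) ?mSs // => [|y /Ss01 /andP [] //].
  rewrite -sizeT -{1}(idx_max sT T1) ?nth_index // => y /T01 /andP [] //.
- move=> a b + + hab /=; rewrite -!mSs => ha hb.
  apply: (sorted_nth_lt sT (sorted_idx sSs ha hb hab)).
  by rewrite sizeT index_mem.
Qed.
End Embed.

Definition tconst (t : fo_term) : seq nat := match t with TCst k => [:: k] | _ => [::] end.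
Fixpoint consts (B : fo_form) : seq nat :=
  match B with
  | FAtom _ ts => flatten (map tconst ts)
  | FAnd B C | FOr B C | FImp B C => consts B ++ consts C
  | _ => [::]
  end.
Fixpoint atoms_ok (Q : nat -> seq fo_term -> Prop) (B : fo_form) : Prop :=
  match B with
  | FAtom p ts => Q p ts
  | FAnd B C | FOr B C | FImp B C => atoms_ok Q B /\ atoms_ok Q C
  | _ => True
  end.
Fixpoint upds (U : Type) (e : nat -> U) (xs : seq nat) (us : seq U) : nat -> U :=
  match xs, us with
  | x :: xs', u :: us' => upds (upd e x u) xs' us'
  | _, _ => e
  end.

Lemma atoms_ok_mono (Q Q' : nat -> seq fo_term -> Prop) B :
  (forall p ts, Q p ts -> Q' p ts) -> atoms_ok Q B -> atoms_ok Q' B.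
Proof. by move=> H; elim: B => //= [B IB C IC|B IB C IC|B IB C IC] [h1 h2]; split; auto. Qed.

Lemma atoms_ok_and (Q1 Q2 Q : nat -> seq fo_term -> Prop) B :
  (forall p ts, Q1 p ts -> Q2 p ts -> Q p ts) -> atoms_ok Q1 B -> atoms_ok Q2 B -> atoms_ok Q B.
Proof.
move=> H; elim: B => /= [|p ts|B IB C IC|B IB C IC|B IB C IC|x B IB|x B IB] //; try exact: H;
  by move=> [? ?] [? ?]; split; auto.
Qed.

Lemma atoms_consts B : atoms_ok (fun p ts => {subset flatten (map tconst ts) <= consts B}) B.
Proof.
elim: B => //= [p ts|B IB C IC|B IB C IC|B IB C IC]; first by move=> x.
all: split;
  (apply: atoms_ok_mono; last eassumption); move=> p ts H x hx; rewrite mem_cat H ?orbT //.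
Qed.

Section Quant.
Variables (U : Type) (c : nat -> U) (P : nat -> seq U -> R).
Hypothesis P01 : forall p l, 0 <= P p l <= 1.

Lemma witness xs C e : eval c P e (alls xs C) < 1 ->
  exists us, size us = size xs /\ eval c P (upds e xs us) C < 1.
Proof.
elim: xs e => [|x xs IH] e /=; first by move=> h; exists [::].
move=> /(inf_lt_img (e x)) [u /IH [us [h1 h2]]].
by exists (u :: us); rewrite /= h1.
Qed.

Lemma exs_ge ys C e vs : size vs = size ys ->
  eval c P (upds e ys vs) C <= eval c P e (exs ys C).
Proof.
elim: ys e vs => [|y ys IH] e [|v vs] //=.
move=> [hs]; apply: le_trans (IH _ _ hs) _.
exact: (img_le_sup (fun u => eval01 c P01 (upd e y u) (exs ys C))).
Qed.

Lemma alls_le xs C e ws : size ws = size xs ->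
  eval c P e (alls xs C) <= eval c P (upds e xs ws) C.
Proof.
elim: xs e ws => [|x xs IH] e [|i ws] //=.
move=> [hs]; apply: le_trans (IH _ _ hs).
exact: (inf_le_img (fun u => eval01 c P01 (upd e x u) (alls xs C))).
Qed.

Lemma exs_le ys C e d : (forall js, size js = size ys -> eval c P (upds e ys js) C <= d) ->
  eval c P e (exs ys C) <= d.
Proof.
elim: ys e => [|y ys IH] e /= H; first by apply: (H [::]).
apply: (sup_le_img (e y)) => u; apply: IH => js hs; apply: (H (u :: js)); by rewrite /= hs.
Qed.
End Quant.

Section FinModel.
Variables (U : Type) (c : nat -> U) (P : nat -> seq U -> R).
Variables (D : Type) (iota_ : D -> U) (c' : nat -> D) (h : R -> R) (S : seq R).
Hypotheses (h0 : h 0 = 0) (h1 : h 1 = 1) (S0 : 0 \in S) (S1 : 1 \in S).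
Hypothesis hmono : forall a b, a \in S -> b \in S -> a < b -> h a < h b.
Definition Ph p (l : seq D) := h (P p (map iota_ l)).

Lemma h_le a b : a \in S -> b \in S -> a <= b -> h a <= h b.
Proof. by move=> ha hb; rewrite le_eqVlt => /orP [/eqP ->|/(hmono ha hb) /ltW]. Qed.

Definition atomQ (p : nat) (ts : seq fo_term) : Prop :=
  forall e' : nat -> D,
    map iota_ (map (eval_term c' e') ts) = map (eval_term c (fun x => iota_ (e' x))) ts /\
    P p (map (eval_term c (fun x => iota_ (e' x))) ts) \in S.

Lemma qf_h e' B : qfree B -> atoms_ok atomQ B ->
  eval c' Ph e' B = h (eval c P (fun x => iota_ (e' x)) B) /\
  eval c P (fun x => iota_ (e' x)) B \in S.
Proof.
elim: B => [|p ts|B IB C IC|B IB C IC|B IB C IC|x B IB|x B IB] //=.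
- by move=> _ /(_ e') [H1 H2]; rewrite /Ph H1.
- move=> /andP [qB qC] [aB aC]; have [IB1 IB2] := IB qB aB; have [IC1 IC2] := IC qC aC.
  rewrite IB1 IC1; case: (leP (eval c P (fun x => iota_ (e' x)) B) (eval c P (fun x => iota_ (e' x)) C)) => hh.
    by rewrite !min_l // h_le.
  by rewrite !min_r // h_le // ltW.
- move=> /andP [qB qC] [aB aC]; have [IB1 IB2] := IB qB aB; have [IC1 IC2] := IC qC aC.
  rewrite IB1 IC1; case: (leP (eval c P (fun x => iota_ (e' x)) B) (eval c P (fun x => iota_ (e' x)) C)) => hh.
    by rewrite !max_r // h_le.
  by rewrite !max_l // h_le // ltW.
- move=> /andP [qB qC] [aB aC]; have [IB1 IB2] := IB qB aB; have [IC1 IC2] := IC qC aC.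
  rewrite IB1 IC1; case: (leP (eval c P (fun x => iota_ (e' x)) B) (eval c P (fun x => iota_ (e' x)) C)) => hh.
    by rewrite h_le.
  by rewrite leNgt hmono.
Qed.
End FinModel.

Fixpoint tuples (T : finType) (k : nat) : seq (seq T) :=
  if k is k'.+1 then [seq x :: l | x <- enum T, l <- tuples T k'] else [:: [::]].

Lemma mem_tuples (T : finType) (l : seq T) : l \in tuples T (size l).
Proof.
elim: l => [|a l IH] /=; first by rewrite mem_head.
by apply: (allpairs_f (fun x l => x :: l)); rewrite ?mem_enum.
Qed.

Fixpoint vals (U : Type) (D : finType) (P : nat -> seq U -> R) (iota_ : D -> U) (B : fo_form) : seq R :=
  match B with
  | FAtom p ts => [seq P p (map iota_ l) | l <- tuples D (size ts)]
  | FAnd B C | FOr B C | FImp B C => vals P iota_ B ++ vals P iota_ C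
  | _ => [::]
  end.

Lemma atoms_vals (U : Type) (D : finType) (P : nat -> seq U -> R) (iota_ : D -> U) B :
  atoms_ok (fun p ts => forall l : seq D, size l = size ts -> P p (map iota_ l) \in vals P iota_ B) B.
Proof.
elim: B => //= [p ts|B IB C IC|B IB C IC|B IB C IC].
  by move=> l hl; apply: map_f; rewrite -hl mem_tuples.
all: split; (apply: atoms_ok_mono; last eassumption); move=> p ts H l hl; rewrite mem_cat H ?orbT //.
Qed.

Lemma vals01 (U : Type) (D : finType) (P : nat -> seq U -> R) (iota_ : D -> U) B :
  (forall p l, 0 <= P p l <= 1) -> forall x, x \in vals P iota_ B -> 0 <= x <= 1.
Proof.
move=> P01; elim: B => //= [p ts|B IB C IC|B IB C IC|B IB C IC] x.
  by case/mapP => l _ ->.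
all: by rewrite mem_cat => /orP [/IB|/IC].
Qed.

Lemma iota_upd (U D : Type) (iota_ : D -> U) (e' : nat -> D) x w :
  (fun y => iota_ (upd e' x w y)) = upd (fun y => iota_ (e' y)) x (iota_ w).
Proof. by apply: funext => y; rewrite /upd; case: ifP. Qed.

Lemma iota_upds (U D : Type) (iota_ : D -> U) xs (e' : nat -> D) ws :
  (fun y => iota_ (upds e' xs ws y)) = upds (fun y => iota_ (e' y)) xs (map iota_ ws).
Proof.
elim: xs e' ws => [|x xs IH] e' [|w ws] //=.
by rewrite IH iota_upd.
Qed.

Lemma maxlist_ge (s : seq R) x : x \in s -> x <= foldr Num.max 0 s.
Proof.
elim: s => //= a s IH; rewrite in_cons => /orP [/eqP ->|/IH h].
  by rewrite le_max lexx.
by rewrite le_max h orbT.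
Qed.

Lemma maxlist_lt (s : seq R) : (forall x, x \in s -> x < 1) -> foldr Num.max 0 s < 1.
Proof.
elim: s => [|a s IH] H /=; first by rewrite ltr01.
rewrite gt_max H ?mem_head //=; apply: IH => x hx; apply: H; by rewrite in_cons hx orbT.
Qed.

Lemma val_transfer V W A : V `<=` [set x | 0 <= x <= 1] -> godel_set W -> infinite_set W ->
  BS_val A -> valid W A -> valid V A.
Proof.
move=> V01 [_ [W01 [W0 W1]]] Winf [_ [xs [ys [psi [qpsi ->]]]]] HW U u0 c P HP.
have P01 : forall p l, 0 <= P p l <= 1 by move=> p l; exact: (V01 _ (HP p l)).
apply: contrapT => hne.
pose e0 := fun _ : nat => u0.
have hlt : eval c P e0 (alls xs (exs ys psi)) < 1.
  by rewrite lt_neqAle; apply/andP; split; [apply/eqP|case/andP: (eval01 c P01 e0 (alls xs (exs ys psi)))].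
have [us [hsz hus]] := witness hlt.
pose estar := upds e0 xs us.
pose ks := consts psi.
pose L := u0 :: (map c ks ++ us).
pose N := size (map c ks ++ us).
pose iota_ (i : 'I_N.+1) := nth u0 L i.
pose c' (k : nat) := (inord (index k ks).+1 : 'I_N.+1).
have hc' : forall k, k \in ks -> iota_ (c' k) = c k.
  move=> k hk; rewrite /iota_ /c' inordK; last first.
    rewrite ltnS /N size_cat size_map; apply: leq_trans (leq_addr _ _).
    by rewrite index_mem.
  rewrite /L /= nth_cat size_map index_mem hk (nth_map 0%nat) ?index_mem //.
  by rewrite nth_index.
have term_map : forall (e' : nat -> 'I_N.+1) ts, {subset flatten (map tconst ts) <= ks} ->
    map iota_ (map (eval_term c' e') ts) = map (eval_term c (fun x => iota_ (e' x))) ts.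
  move=> e'; elim=> [|t ts IH] //= Hs.
  rewrite IH; last by move=> x hx; apply: Hs; rewrite mem_cat hx orbT.
  case: t Hs => [x|k] Hs //=.
  by rewrite hc' // Hs //= mem_head.
pose S := 0 :: 1 :: vals P iota_ psi.
have S01 : forall x, x \in S -> 0 <= x <= 1.
  move=> x; rewrite !in_cons => /orP [/eqP ->|/orP [/eqP ->|/(vals01 P01)]] //.
  - by rewrite lexx ler01.
  - by rewrite ler01 lexx.
have S0 : 0 \in S by rewrite mem_head.
have S1 : 1 \in S by rewrite !in_cons eqxx orbT.
have [h [hW h0 h1 hmono]] := embed Winf W0 W1 W01 S01 S0 S1.
have Hatoms : atoms_ok (atomQ c P iota_ c' S) psi.
  apply: (atoms_ok_and _ (atoms_consts psi) (atoms_vals P iota_ psi)).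
  move=> p ts Hc Hv e'; rewrite -term_map //; split=> //.
  by rewrite !in_cons Hv ?orbT // !size_map.
pose ws := [seq (inord (size (map c ks) + j).+1 : 'I_N.+1) | j <- iota 0 (size us)].
have hws : map iota_ ws = us.
  rewrite -map_comp -[RHS](mkseq_nth u0 us) /mkseq; apply/eq_in_map => j.
  rewrite mem_iota add0n => hj /=; rewrite /iota_ inordK; last first.
    by rewrite ltnS /N size_cat ltn_add2l.
  by rewrite /L /= nth_cat ltnNge leq_addr /= addKn.
pose e'star := upds (fun _ : nat => (ord0 : 'I_N.+1)) xs ws.
have Hes : (fun x => iota_ (e'star x)) = estar by rewrite /e'star iota_upds hws.
pose d := foldr Num.max 0 [seq h a | a <- S & a < 1].
have dlt : d < 1.
  apply: maxlist_lt => x /mapP [a]; rewrite mem_filter => /andP [ha aS] ->.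
  by rewrite -h1; apply: hmono.
have hle_d : forall a, a \in S -> a < 1 -> h a <= d.
  by move=> a aS ha; apply: maxlist_ge; apply: map_f; rewrite mem_filter ha aS.
have Ph01 : forall p l, 0 <= Ph P iota_ h p l <= 1 by move=> p l; apply: W01; apply: hW.
have step : forall js, size js = size ys -> eval c' (Ph P iota_ h) (upds e'star ys js) psi <= d.
  move=> js hjs.
  have [q1 q2] := qf_h h0 h1 S0 S1 hmono (upds e'star ys js) qpsi Hatoms.
  rewrite q1; rewrite iota_upds Hes in q2 *.
  apply: hle_d => //; apply: le_lt_trans (exs_ge c P01 psi estar _) hus.
  by rewrite size_map.
have := HW 'I_N.+1 ord0 c' (Ph P iota_ h) (fun p l => hW _).
apply/eqP; rewrite lt_eqF //.
apply: le_lt_trans dlt.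
have hws_sz : size ws = size xs by rewrite size_map size_iota.
apply: le_trans (alls_le c' Ph01 (exs ys psi) (fun _ : nat => (ord0 : 'I_N.+1)) hws_sz) _.
exact: (exs_le step).
Qed.

Lemma partB (V V' : set R) : godel_set V -> godel_set V' ->
     infinite_set V -> infinite_set V' ->
     forall A : fo_form, BS_val A -> (valid V A <-> valid V' A).
Proof.
move=> gV gV' iV iV' A hA; split.
  by apply: val_transfer => //; case: gV' => _ [].
by apply: val_transfer => //; case: gV => _ [].
Qed.

Close Scope ring_scope.
Close Scope classical_set_scope.

Theorem corollary5p3 :
  (* (a) *)
  (forall (V V' : set R), godel_set V -> godel_set V' ->
     forall A : fo_form, BS_sat A -> (sat1 V A <-> sat1 V' A)) /\
  (* (b) *)
  (forall (V V' : set R), godel_set V -> godel_set V' ->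
     infinite_set V -> infinite_set V' ->
     forall A : fo_form, BS_val A -> (valid V A <-> valid V' A)) /\
  (* (c) *)
  (forall m : nat, (2 <= m)%N ->
     (forall A : fo_form, BS_val A -> valid (Vm m.+1) A -> valid (Vm m) A) /\
     (exists A : fo_form, BS_val A /\ valid (Vm m) A /\ ~ valid (Vm m.+1) A)).
Proof.
split; first exact: partA.
split; first exact: partB.
exact: partC.
Qed.
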